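(* For every $n\in\mathbb N$, $\mathbb{T}_n$ (with the maps $\mathbb{T}_n(f)$ and supports $\operatorname{supp}^{\mathbb{T}_n}$) and $\mathbb{T}_{n+1}^-$ (with the maps $\mathbb{T}_{n+1}^-(f)$ and supports $\operatorname{supp}^{\mathbb{T}_{n+1}^-}$) are normal PO-dilators.
   Context: A quasi embedding between partial orders $X,Y$ is a function $f$ with $f(x)\leq_Y f(y)\Rightarrow x\leq_X y$; an embedding also satisfies the converse. $\mathrm{PO}$ is the category of partial orders and quasi embeddings. $[X]^{<\omega}$ denotes the finite subsets of $X$, with $[f]^{<\omega}(a)=\{f(x)\mid x\in a\}$. A PO-dilator is a functor $W:\mathrm{PO}\to\mathrm{PO}$ mapping embeddings to embeddings, with a natural transformation $\operatorname{supp}^W:W\Rightarrow[\cdot]^{<\omega}$ such that for every embedding $f:X\to Y$, $\operatorname{rng}(W(f))=\{\sigma\in W(Y)\mid\operatorname{supp}^W_Y(\sigma)\subseteq\operatorname{rng}(f)\}$. For finite $a,b\subseteq X$, $a\leq^{\mathrm{fin}}_X b$ iff every $x\in a$ has some $y\in b$ with $x\leq_X y$. $W$ is normal if $\sigma\leq_{W(X)}\tau$ implies $\operatorname{supp}^W_X(\sigma)\leq^{\mathrm{fin}}_X\operatorname{supp}^W_X(\tau)$. For a partial order $X$, $M(X)$ is the set of finite multisets $[x_0,\dots,x_{m-1}]$ with elements from $X$, ordered by $[x_0,\dots,x_{m-1}]\leq_{M(X)}[y_0,\dots,y_{k-1}]$ iff there is an injection $g$ with $x_i\leq_X y_{g(i)}$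 for all $i<m$. For $n\in\mathbb N$ and a partial order $X$, $\mathbb{T}_n(X)$ is generated by: $\overline x$ for each $x\in X$; $i\star\sigma$ for each $\sigma=[t_0,\dots,t_{m-1}]\in M(\mathbb{T}_n(X))$ and $i<n$. For $n>0$, $\mathbb{T}_n^-(X)=\{\overline x\mid x\in X\}\cup\{0\star\sigma\mid\sigma\in M(\mathbb{T}_n(X))\}$. The relation $\leq_{\mathbb{T}_n(X)}$ is defined recursively: $\overline x\leq t$ iff either $t=\overline y$ with $x\leq_X y$, or $t=j\star[t_0,\dots,t_{m-1}]$ and $\overline x\leq t_l$ for some $l<m$; $i\star\sigma\leq t$ iff either $t=i\star\tau$ with $\sigma\leq_{M(\mathbb{T}_n(X))}\tau$, or $t=j\star[t_0,\dots,t_{m-1}]$ with $j\geq i$ and $i\star\sigma\leq t_l$ for some $l<m$. This is a partial order; $\leq_{\mathbb{T}_n^-(X)}$ is its restriction to $\mathbb{T}_n^-(X)$. For a quasi embedding $f:X\to Y$, $\mathbb{T}_n(f)(\overline x)=\overline{f(x)}$ and $\mathbb{T}_n(f)(i\star[t_0,\dots,t_{m-1}])=i\star[\mathbb{T}_n(f)(t_0),\dots,\mathbb{T}_n(f)(t_{m-1})]$; $\mathbb{T}_n^-(f)$ is its restriction $\mathbb{T}_n^-(X)\to\mathbb{T}_n^-(Y)$. Supports: $\operatorname{supp}^{\mathbb{T}_n}_X(\overline x)=\{x\}$, $\operatorname{supp}^{\mathbb{T}_n}_X(i\star[t_0,\dots,t_{m-1}])=\bigcup_{l<m}\operatorname{supp}^{\mathbb{T}_n}_X(t_l)$;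 $\operatorname{supp}^{\mathbb{T}_n^-}_X$ is its restriction to $\mathbb{T}_n^-(X)$. *)

(* Defs.v *)
From Stdlib Require Import List Arith Lia ClassicalEpsilon.
Import ListNotations.

Record ord := Ord { car :> Type; rel : car -> car -> Prop }.
Arguments rel {o} _ _.

Definition is_po (X : ord) : Prop :=
  (forall x : X, rel x x) /\
  (forall x y : X, rel x y -> rel y x -> x = y) /\
  (forall x y z : X, rel x y -> rel y z -> rel x z).

Definition quasi_emb {X Y : ord} (f : X -> Y) : Prop :=
  forall x y : X, rel (f x) (f y) -> rel x y.

Definition emb {X Y : ord} (f : X -> Y) : Prop :=
  forall x y : X, rel (f x) (f y) <-> rel x y.

Definition is_finite {A : Type} (a : A -> Prop) : Prop :=
  exists l : list A, forall x, a x <-> In x l.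

Definition img {A B : Type} (f : A -> B) (a : A -> Prop) : B -> Prop :=
  fun y => exists x, a x /\ f x = y.

Definition fin_le {X : ord} (a b : X -> Prop) : Prop :=
  forall x, a x -> exists y, b y /\ rel x y.

(* The morphism part is given on all functions; the dilator conditions
   below only constrain it on quasi embeddings between partial orders. *)
Record PO_functor := POFun {
  Fobj : ord -> ord;
  Fmap : forall X Y : ord, (X -> Y) -> Fobj X -> Fobj Y }.
Arguments Fmap p {X Y} _ _.

Definition PO_dilator (W : PO_functor) (supp : forall X : ord, Fobj W X -> X -> Prop) : Prop :=
  (forall X : ord, is_po X -> is_po (Fobj W X)) /\
  (forall (X Y : ord) (f : X -> Y), is_po X -> is_po Y -> quasi_emb f ->
     quasi_emb (Fmap W f)) /\
  (forall X : ord, is_po X -> forall s : Fobj W X, Fmap W (fun x : X => x) s = s) /\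
  (forall (X Y Z : ord) (f : X -> Y) (g : Y -> Z),
     is_po X -> is_po Y -> is_po Z -> quasi_emb f -> quasi_emb g ->
     forall s : Fobj W X, Fmap W (fun x => g (f x)) s = Fmap W g (Fmap W f s)) /\
  (forall (X Y : ord) (f : X -> Y), is_po X -> is_po Y -> emb f -> emb (Fmap W f)) /\
  (forall X : ord, is_po X -> forall s : Fobj W X, is_finite (supp X s)) /\
  (forall (X Y : ord) (f : X -> Y), is_po X -> is_po Y -> quasi_emb f ->
     forall (s : Fobj W X) (y : Y), supp Y (Fmap W f s) y <-> img f (supp X s) y) /\
  (forall (X Y : ord) (f : X -> Y), is_po X -> is_po Y -> emb f ->
     forall t : Fobj W Y,
       (exists s : Fobj W X, Fmap W f s = t) <->
       (forall y, supp Y t y -> exists x, f x = y)).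

Definition normal (W : PO_functor) (supp : forall X : ord, Fobj W X -> X -> Prop) : Prop :=
  forall X : ord, is_po X -> forall s t : Fobj W X,
    rel s t -> fin_le (supp X s) (supp X t).

Definition normal_PO_dilator W supp : Prop := PO_dilator W supp /\ normal W supp.

Definition lab (n : nat) : Type := {i : nat | i < n}.

Inductive rtree (L A : Type) : Type :=
| rleaf : A -> rtree L A
| rnode : L -> list (rtree L A) -> rtree L A.
Arguments rleaf {L A} _.
Arguments rnode {L A} _ _.

(* Multiset comparison: [x_0..x_{m-1}] related to [y_0..y_{k-1}] via
   an injection g with P_{g(i)}(x_i), where P_j is "related to y_j". *)
Definition mrel {A : Type} (ss : list A) (P : list (A -> Prop)) : Prop :=
  exists g : nat -> nat,
    (forall k l, k < length ss -> l < length ss -> g k = g l -> k = l) /\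
    (forall k a, nth_error ss k = Some a ->
       exists p, nth_error P (g k) = Some p /\ p a).

(* Equality of the multisets-based terms (the raw terms are lists, so
   they are identified up to permutation, recursively). *)
Fixpoint req {L A : Type} (s t : rtree L A) {struct t} : Prop :=
  match t with
  | rleaf y => match s with rleaf x => x = y | rnode _ _ => False end
  | rnode j ts =>
      let P := map (fun u => fun a => req a u) ts in
      match s with
      | rleaf _ => False
      | rnode i ss => i = j /\ length ss = length P /\ mrel ss P
      end
  end.

(* The order <=_{T_n(X)}, on raw terms (lv reads off the numeric label). *)
Fixpoint rle {L A : Type} (lv : L -> nat) (R : A -> A -> Prop)
         (s t : rtree L A) {struct t} : Prop :=
  match t with
  | rleaf y => match s with rleaf x => R x y | rnode _ _ => False end
  | rnode j ts =>
      let P := map (fun u => fun a => rle lv R a u) ts in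
      match s with
      | rleaf _ => exists p, In p P /\ p s
      | rnode i ss => (i = j /\ mrel ss P) \/ (lv i <= lv j /\ exists p, In p P /\ p s)
      end
  end.

Fixpoint rmap {L A B : Type} (f : A -> B) (t : rtree L A) : rtree L B :=
  match t with
  | rleaf x => rleaf (f x)
  | rnode i ts => rnode i (map (rmap f) ts)
  end.

Fixpoint rsupp {L A : Type} (t : rtree L A) : A -> Prop :=
  match t with
  | rleaf x => fun y => y = x
  | rnode _ ts => fun y => exists p, In p (map rsupp ts) /\ p y
  end.

(* T_n(X) as the quotient of raw terms by req                          *)

Definition Tcar (n : nat) (X : ord) : Type :=
  {P : rtree (lab n) X -> Prop | exists t, P = (fun u => req u t)}.

Definition cls {n : nat} {X : ord} (t : rtree (lab n) X) : Tcar n X :=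
  exist _ (fun u => req u t) (ex_intro _ t eq_refl).

Definition repr {n : nat} {X : ord} (a : Tcar n X) : rtree (lab n) X :=
  proj1_sig (constructive_indefinite_description _ (proj2_sig a)).

Definition labval {n : nat} (i : lab n) : nat := proj1_sig i.

Definition Tord (n : nat) (X : ord) : ord :=
  Ord (Tcar n X) (fun a b => rle labval (@rel X) (repr a) (repr b)).

Definition Tmap (n : nat) {X Y : ord} (f : X -> Y) (a : Tord n X) : Tord n Y :=
  cls (rmap f (repr a)).

Definition T (n : nat) : PO_functor := POFun (Tord n) (fun X Y f => Tmap n f).

Definition Tsupp (n : nat) (X : ord) (a : Fobj (T n) X) : X -> Prop :=
  rsupp (repr a).

(* T^-_{n+1}(X): terms \overline x or 0 * sigma                       *)

Definition root_ok {n : nat} {A : Type} (t : rtree (lab n) A) : Prop :=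
  match t with rleaf _ => True | rnode i _ => labval i = 0 end.

Lemma rtree_ind' (L A : Type) (P : rtree L A -> Prop) :
  (forall x, P (rleaf x)) ->
  (forall i ts, Forall P ts -> P (rnode i ts)) ->
  forall t, P t.
Proof.
  intros Hl Hn. fix IH 1. intros [x|i ts].
  - apply Hl.
  - apply Hn. induction ts as [|u us IHus]; constructor; [apply IH | exact IHus].
Qed.

Lemma req_refl (L A : Type) (t : rtree L A) : req t t.
Proof.
  induction t as [x|i ts H] using rtree_ind'; simpl; auto.
  split; [reflexivity|]. split; [now rewrite length_map|].
  exists (fun k => k). split; [auto|].
  intros k a Hk. exists (fun b => req b a). split.
  - now rewrite nth_error_map, Hk.
  - rewrite Forall_forall in H. apply H. eapply nth_error_In; eauto.
Qed.

Lemma repr_spec (n : nat) (X : ord) (a : Tcar n X) :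
  proj1_sig a = (fun u => req u (repr a)).
Proof.
  unfold repr. destruct (constructive_indefinite_description _ _) as [t Ht]. exact Ht.
Qed.

Lemma req_root (n : nat) (A : Type) (s t : rtree (lab n) A) :
  req s t -> root_ok t -> root_ok s.
Proof.
  destruct t as [y|j ts]; destruct s as [x|i ss]; simpl; try tauto.
  intros [-> _]; auto.
Qed.

Lemma Tmap_root (n : nat) (X Y : ord) (f : X -> Y) (a : Tcar n X) :
  root_ok (repr a) -> root_ok (repr (Tmap n f a)).
Proof.
  intro H. apply (req_root _ _ _ (rmap f (repr a))).
  - pose proof (repr_spec n Y (Tmap n f a)) as E. simpl in E.
    assert (Hr := req_refl _ _ (repr (Tmap n f a))).
    change ((fun u => req u (repr (Tmap n f a))) (repr (Tmap n f a))) in Hr.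
    rewrite <- E in Hr. exact Hr.
  - destruct (repr a); simpl in *; auto.
Qed.

Definition Tmcar (n : nat) (X : ord) : Type :=
  {a : Tcar (S n) X | root_ok (repr a)}.

Definition Tmord (n : nat) (X : ord) : ord :=
  Ord (Tmcar n X) (fun a b => @rel (Tord (S n) X) (proj1_sig a) (proj1_sig b)).

Definition Tmmap (n : nat) {X Y : ord} (f : X -> Y) (a : Tmord n X) : Tmord n Y :=
  exist _ (Tmap (S n) f (proj1_sig a)) (Tmap_root _ _ _ f _ (proj2_sig a)).

(* Tminus n is T^-_{n+1} *)
Definition Tminus (n : nat) : PO_functor := POFun (Tmord n) (fun X Y f => Tmmap n f).

Definition Tmsupp (n : nat) (X : ord) (a : Fobj (Tminus n) X) : X -> Prop :=
  Tsupp (S n) X (proj1_sig a).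

(* Main.v *)
Require Import Defs.
From Stdlib Require Import List Arith Lia ClassicalEpsilon Classical FunctionalExtensionality PropExtensionality ProofIrrelevance.
Import ListNotations.

Lemma pigeon : forall n (f : nat -> nat), (forall i, i <= n -> f i < n) ->
  exists i j, i < j <= n /\ f i = f j.
Proof.
  induction n as [|m IH]; intros f Hf.
  - specialize (Hf 0 (le_n 0)). lia.
  - destruct (classic (exists i, i <= m /\ f i = f (S m))) as [[i [Hi Heq]]|Hno].
    + exists i, (S m). split; [lia|exact Heq].
    + destruct (Nat.eq_dec (f (S m)) m) as [Hm|Hm].
      * destruct (IH f) as [i [j [Hij Heq]]].
        { intros i Hi. assert (f i < S m) by (apply Hf; lia).
          assert (f i <> m). { intro E. apply Hno. exists i. split; [lia| congruence]. } lia. }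
        exists i, j. split; [lia|exact Heq].
      * pose (f' := fun i => if Nat.eq_dec (f i) m then f (S m) else f i).
        destruct (IH f') as [i [j [Hij Heq]]].
        { intros i Hi. unfold f'. assert (f (S m) < S m) by (apply Hf; lia).
          assert (f i < S m) by (apply Hf; lia).
          destruct (Nat.eq_dec (f i) m); lia. }
        unfold f' in Heq.
        destruct (Nat.eq_dec (f i) m) as [Ei|Ei]; destruct (Nat.eq_dec (f j) m) as [Ej|Ej].
        -- exists i, j. split; [lia|congruence].
        -- exfalso. apply Hno. exists j. split; [lia|congruence].
        -- exfalso. apply Hno. exists i. split; [lia|congruence].
        -- exists i, j. split; [lia|exact Heq].
Qed.

Lemma iter_lt n (p : nat -> nat) : (forall k, k < n -> p k < n) ->
  forall m k, k < n -> Nat.iter m p k < n.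
Proof. intros Hp m; induction m; intros k Hk; simpl; auto. Qed.

Lemma cycle n (p : nat -> nat) :
  (forall k, k < n -> p k < n) ->
  (forall k l, k < n -> l < n -> p k = p l -> k = l) ->
  forall k, k < n -> exists m, Nat.iter (S m) p k = k.
Proof.
  intros Hp Hi k Hk.
  destruct (pigeon n (fun i => Nat.iter i p k)) as [i [j [Hij Heq]]].
  { intros i _. apply iter_lt; auto. }
  assert (forall a d, Nat.iter a p k = Nat.iter (a + d) p k -> k = Nat.iter d p k) as Hc.
  { induction a as [|a IHa]; intros d E; simpl in E; auto.
    apply IHa. apply Hi; [apply iter_lt; auto| apply iter_lt; auto| exact E]. }
  exists (j - i - 1). replace (S (j - i - 1)) with (j - i) by lia.
  symmetry. apply (Hc i). replace (i + (j - i)) with j by lia. exact Heq.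
Qed.

Definition mr {A B : Type} (r : A -> B -> Prop) (l1 : list A) (l2 : list B) : Prop :=
  exists g : nat -> nat,
    (forall k l, k < length l1 -> l < length l1 -> g k = g l -> k = l) /\
    (forall k a, nth_error l1 k = Some a -> exists b, nth_error l2 (g k) = Some b /\ r a b).

Lemma mrel_mr {A B} (r : A -> B -> Prop) ss ts :
  mrel ss (map (fun u a => r a u) ts) <-> mr r ss ts.
Proof.
  unfold mrel, mr. split; intros [g [Hi Hg]]; exists g; split; auto; intros k a Hk.
  - destruct (Hg k a Hk) as [p [Hp Hpa]]. rewrite nth_error_map in Hp.
    destruct (nth_error ts (g k)) as [b|] eqn:E; simpl in Hp; try discriminate.
    injection Hp as <-. exists b; auto.
  - destruct (Hg k a Hk) as [b [Hb Hr]]. exists (fun a => r a b). rewrite nth_error_map, Hb. auto.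
Qed.

Lemma nth_some {A} (l : list A) k : k < length l -> exists a, nth_error l k = Some a.
Proof. intro H. apply nth_error_Some in H. destruct (nth_error l k); [eauto|congruence]. Qed.
Lemma some_lt {A} (l : list A) k a : nth_error l k = Some a -> k < length l.
Proof. intro H. apply nth_error_Some. congruence. Qed.

Lemma mr_impl {A B} (r r' : A -> B -> Prop) l1 l2 :
  (forall a b, In a l1 -> In b l2 -> r a b -> r' a b) -> mr r l1 l2 -> mr r' l1 l2.
Proof.
  intros H [g [Hi Hg]]. exists g. split; auto. intros k a Hk.
  destruct (Hg k a Hk) as [b [Hb Hr]]. exists b. split; auto.
  apply H; auto; eapply nth_error_In; eauto.
Qed.

Lemma mr_trans {A B C} (r1 : A -> B -> Prop) (r2 : B -> C -> Prop) (r3 : A -> C -> Prop) l1 l2 l3 :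
  (forall a b c, In a l1 -> In b l2 -> In c l3 -> r1 a b -> r2 b c -> r3 a c) ->
  mr r1 l1 l2 -> mr r2 l2 l3 -> mr r3 l1 l3.
Proof.
  intros H [g [Hgi Hg]] [h [Hhi Hh]]. exists (fun k => h (g k)). split.
  - intros k l Hk Hl E.
    destruct (nth_some l1 k Hk) as [a Ha]. destruct (nth_some l1 l Hl) as [a' Ha'].
    destruct (Hg _ _ Ha) as [b [Hb _]]. destruct (Hg _ _ Ha') as [b' [Hb' _]].
    apply Hgi; auto. apply Hhi; eauto using some_lt.
  - intros k a Ha. destruct (Hg _ _ Ha) as [b [Hb Hab]]. destruct (Hh _ _ Hb) as [c [Hc Hbc]].
    exists c. split; auto. apply (H a b c); eauto using nth_error_In.
Qed.

Lemma mr_length {A B} (r : A -> B -> Prop) l1 l2 : mr r l1 l2 -> length l1 <= length l2.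
Proof.
  intros [g [Hgi Hg]]. destruct (le_lt_dec (length l1) (length l2)) as [|Hlt]; auto. exfalso.
  destruct (pigeon (length l2) g) as [i [j [Hij E]]].
  { intros i Hi. destruct (nth_some l1 i) as [a Ha]; [lia|]. destruct (Hg _ _ Ha) as [b [Hb _]]. eapply some_lt; eauto. }
  assert (i = j) by (apply Hgi; auto; lia). lia.
Qed.

Lemma mr_surj {A B} (r : A -> B -> Prop) l1 l2 g :
  length l1 = length l2 ->
  (forall k l, k < length l1 -> l < length l1 -> g k = g l -> k = l) ->
  (forall k a, nth_error l1 k = Some a -> exists b, nth_error l2 (g k) = Some b /\ r a b) ->
  forall l, l < length l1 -> exists k, k < length l1 /\ g k = l.
Proof.
  intros Hlen Hgi Hg.
  assert (Hb : forall k, k < length l1 -> g k < length l1).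
  { intros k Hk. destruct (nth_some l1 k Hk) as [a Ha]. destruct (Hg _ _ Ha) as [b [Hb _]]. rewrite Hlen. eapply some_lt; eauto. }
  intros l Hl. destruct (cycle (length l1) g Hb Hgi l Hl) as [m Hm].
  exists (Nat.iter m g l). split; [apply iter_lt; auto| exact Hm].
Qed.

Lemma mr_sym {A B} (r : A -> B -> Prop) l1 l2 :
  length l1 = length l2 -> mr r l1 l2 -> mr (fun b a => r a b) l2 l1.
Proof.
  intros Hlen [g [Hgi Hg]].
  assert (Hs := mr_surj r l1 l2 g Hlen Hgi Hg).
  assert (H : forall l, exists k, l < length l1 -> k < length l1 /\ g k = l).
  { intros l. destruct (lt_dec l (length l1)) as [Hl|Hl].
    - destruct (Hs l Hl) as [k Hk]. exists k. auto.
    - exists 0. intro; lia. }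
  exists (fun l => proj1_sig (constructive_indefinite_description _ (H l))). split.
  - intros k l Hk Hl E.
    destruct (constructive_indefinite_description _ (H k)) as [k' Hk'].
    destruct (constructive_indefinite_description _ (H l)) as [l' Hl']. simpl in E. subst l'.
    rewrite <- Hlen in Hk, Hl. destruct (Hk' Hk) as [_ E1]. destruct (Hl' Hl) as [_ E2]. congruence.
  - intros l b Hb. destruct (constructive_indefinite_description _ (H l)) as [k Hk]. simpl.
    assert (Hl : l < length l1) by (rewrite Hlen; eapply some_lt; eauto).
    destruct (Hk Hl) as [Hk1 Hk2]. destruct (nth_some l1 k Hk1) as [a Ha].
    exists a. split; auto. destruct (Hg _ _ Ha) as [b' [Hb' Hr]]. rewrite Hk2, Hb in Hb'. injection Hb' as <-. exact Hr.
Qed.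

Lemma mr_map {A B C D} (f : A -> C) (f' : B -> D) (r : C -> D -> Prop) l1 l2 :
  mr r (map f l1) (map f' l2) <-> mr (fun a b => r (f a) (f' b)) l1 l2.
Proof.
  unfold mr. rewrite !length_map. split; intros [g [Hgi Hg]]; exists g; split; auto; intros k a Ha.
  - destruct (Hg k (f a)) as [d [Hd Hr]]. { rewrite nth_error_map, Ha. reflexivity. }
    rewrite nth_error_map in Hd. destruct (nth_error l2 (g k)) as [b|]; simpl in Hd; try discriminate.
    injection Hd as <-. eauto.
  - rewrite nth_error_map in Ha. destruct (nth_error l1 k) as [c|] eqn:Ec; simpl in Ha; try discriminate.
    injection Ha as <-. destruct (Hg k c Ec) as [b [Hb Hr]]. exists (f' b). rewrite nth_error_map, Hb. auto.
Qed.

Lemma mr_antisym {A} (r : A -> A -> Prop) l1 l2 :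
  (forall a b c, r a b -> r b c -> r a c) ->
  mr r l1 l2 -> mr r l2 l1 -> mr (fun a b => r a b /\ r b a) l1 l2.
Proof.
  intros Htr H12 H21.
  assert (Hlen : length l1 = length l2) by (apply Nat.le_antisymm; eapply mr_length; eauto).
  destruct H12 as [g [Hgi Hg]]. destruct H21 as [h [Hhi Hh]].
  assert (Hgb : forall k, k < length l1 -> g k < length l1).
  { intros k Hk. destruct (nth_some l1 k Hk) as [a Ha]. destruct (Hg _ _ Ha) as [b [Hb _]]. rewrite Hlen. eapply some_lt; eauto. }
  assert (Hhb : forall k, k < length l1 -> h k < length l1).
  { intros k Hk. rewrite Hlen in Hk. destruct (nth_some l2 k Hk) as [a Ha]. destruct (Hh _ _ Ha) as [b [Hb _]]. eapply some_lt; eauto. }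
  pose (p := fun k => h (g k)).
  assert (Hpb : forall k, k < length l1 -> p k < length l1) by (intros; unfold p; auto).
  assert (Hpi : forall k l, k < length l1 -> l < length l1 -> p k = p l -> k = l).
  { unfold p. intros k l Hk Hl E. apply Hgi; auto. apply Hhi; try (rewrite <- Hlen; auto). exact E. }
  assert (Hstep : forall k a, nth_error l1 k = Some a -> exists c, nth_error l1 (p k) = Some c /\ r a c).
  { intros k a Ha. destruct (Hg _ _ Ha) as [b [Hb Hab]]. destruct (Hh _ _ Hb) as [c [Hc Hbc]]. exists c. split; [exact Hc| eauto]. }
  assert (Hchain : forall m k a, nth_error l1 k = Some a -> exists c, nth_error l1 (Nat.iter (S m) p k) = Some c /\ r a c).
  { induction m as [|m IH]; intros k a Ha.
    - apply Hstep; auto.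
    - destruct (IH k a Ha) as [c [Hc Hac]]. destruct (Hstep _ _ Hc) as [d [Hd Hcd]].
      exists d. split; [exact Hd| eauto]. }
  exists g. split; auto. intros k a Ha.
  destruct (Hg _ _ Ha) as [b [Hb Hab]]. exists b. split; auto. split; auto.
  destruct (Hh _ _ Hb) as [c [Hc Hbc]].
  destruct (cycle (length l1) p Hpb Hpi k (some_lt _ _ _ Ha)) as [m Hm].
  destruct m as [|m].
  - assert (E : h (g k) = k) by exact Hm. rewrite E, Ha in Hc. injection Hc as <-. exact Hbc.
  - destruct (Hchain m (h (g k)) c Hc) as [d [Hd Hcd]].
    assert (E : Nat.iter (S m) p (h (g k)) = k).
    { transitivity (Nat.iter (S (S m)) p k); [symmetry; exact (Nat.iter_succ_r (S m) nat p k) | exact Hm]. }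
    rewrite E, Ha in Hd. injection Hd as <-. eauto.
Qed.

Lemma ex_in_map {U V} (F : U -> V -> Prop) (ts : list U) (s : V) :
  (exists p, In p (map F ts) /\ p s) <-> exists u, In u ts /\ F u s.
Proof. split.
 - intros [p [Hp Hs]]. apply in_map_iff in Hp. destruct Hp as [u [<- Hu]]. eauto.
 - intros [u [Hu Hs]]. exists (F u). split; auto. apply in_map; auto. Qed.

Lemma req_nn {L A} i ss j ts : @req L A (rnode i ss) (rnode j ts) <-> i = j /\ length ss = length ts /\ mr req ss ts.
Proof. simpl. rewrite length_map, mrel_mr. tauto. Qed.

Lemma rle_nn {L A} (lv : L -> nat) (R : A -> A -> Prop) i ss j ts : rle lv R (rnode i ss) (rnode j ts) <->
  (i = j /\ mr (rle lv R) ss ts) \/ (lv i <= lv j /\ exists u, In u ts /\ rle lv R (rnode i ss) u).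
Proof. simpl. rewrite mrel_mr, ex_in_map. tauto. Qed.
Lemma rle_ln {L A} (lv : L -> nat) (R : A -> A -> Prop) x j ts : rle lv R (rleaf x) (rnode j ts) <-> exists u, In u ts /\ rle lv R (rleaf x) u.
Proof. simpl. rewrite ex_in_map. tauto. Qed.

Lemma req_sym {L A} (s t : rtree L A) : req s t -> req t s.
Proof.
  revert s. induction t as [y|j ts IH] using rtree_ind'; intros [x|i ss] H.
  - simpl in *; congruence.
  - simpl in H; tauto.
  - simpl in H; tauto.
  - apply req_nn in H. apply req_nn. destruct H as [-> [Hl Hm]]. split; [auto|split; [auto|]].
    apply mr_sym in Hm; auto. revert Hm. apply mr_impl. intros u a Hu Ha Hr.
    rewrite Forall_forall in IH. apply IH; auto.
Qed.

Lemma req_trans {L A} (s t u : rtree L A) : req s t -> req t u -> req s u.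
Proof.
  revert s t. induction u as [z|k us IH] using rtree_ind'; intros s t H1 H2.
  - destruct t as [y|j ts]; [|simpl in H2; tauto]. destruct s as [x|i ss]; [|simpl in H1; tauto].
    simpl in *; congruence.
  - destruct t as [y|j ts]; [simpl in H2; tauto|]. destruct s as [x|i ss]; [simpl in H1; tauto|].
    apply req_nn in H1, H2. apply req_nn. destruct H1 as [-> [L1 M1]]. destruct H2 as [-> [L2 M2]].
    split; [auto|split; [congruence|]]. eapply mr_trans; [|exact M1|exact M2].
    intros a b c _ _ Hc Hab Hbc. rewrite Forall_forall in IH. eapply IH; eauto.
Qed.

Lemma req_rle {L A} (lv : L -> nat) (R : A -> A -> Prop) (Hr : forall x, R x x) (s t : rtree L A) :
  req s t -> rle lv R s t.
Proof.
  revert s. induction t as [y|j ts IH] using rtree_ind'; intros [x|i ss] H.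
  - simpl in *. subst. apply Hr.
  - simpl in H; tauto.
  - simpl in H; tauto.
  - apply req_nn in H. apply rle_nn. left. destruct H as [-> [_ M]]. split; auto.
    revert M. apply mr_impl. intros a b _ Hb Hab. rewrite Forall_forall in IH. apply IH; auto.
Qed.

Lemma rle_refl {L A} (lv : L -> nat) (R : A -> A -> Prop) (Hr : forall x, R x x) t : rle lv R t t.
Proof. apply req_rle; auto. apply req_refl. Qed.

Lemma rle_trans {L A} (lv : L -> nat) (R : A -> A -> Prop) (Ht : forall x y z, R x y -> R y z -> R x z)
  (s t u : rtree L A) : rle lv R s t -> rle lv R t u -> rle lv R s u.
Proof.
  revert s t. induction u as [z|k us IH] using rtree_ind'; intros s t H1 H2.
  - destruct t as [y|j ts]; [|simpl in H2; tauto]. destruct s as [x|i ss]; [|simpl in H1; tauto].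
    simpl in *; eauto.
  - rewrite Forall_forall in IH. destruct t as [y|j ts].
    + destruct s as [x|i ss]; [|simpl in H1; tauto].
      apply rle_ln in H2. apply rle_ln. destruct H2 as [c [Hc H2]]. exists c. split; auto. eapply IH; eauto.
    + apply rle_nn in H2. destruct H2 as [[-> M2] | [Hlv [c [Hc H2]]]].
      * destruct s as [x|i ss].
        -- apply rle_ln in H1. destruct H1 as [b [Hb H1]]. apply rle_ln.
           destruct (In_nth_error _ _ Hb) as [kk Hkk]. destruct M2 as [g [_ Hg]].
           destruct (Hg _ _ Hkk) as [c [Hc Hbc]]. exists c. split; [eapply nth_error_In; eauto|].
           eapply IH; eauto using nth_error_In.
        -- apply rle_nn in H1. apply rle_nn. destruct H1 as [[-> M1] | [Hlv [b [Hb H1]]]].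
           ++ left. split; auto. eapply mr_trans; [|exact M1|exact M2]. intros a b c _ _ Hc Hab Hbc. eapply IH; eauto.
           ++ right. split; auto. destruct (In_nth_error _ _ Hb) as [kk Hkk]. destruct M2 as [g [_ Hg]].
              destruct (Hg _ _ Hkk) as [c [Hc Hbc]]. exists c. split; [eapply nth_error_In; eauto|].
              eapply IH; eauto using nth_error_In.
      * assert (rle lv R s c) by (eapply IH; eauto).
        destruct s as [x|i ss].
        -- apply rle_ln. eauto.
        -- apply rle_nn. right. split; [|eauto].
           apply rle_nn in H1. destruct H1 as [[-> _]|[Hl _]]; lia.
Qed.

Fixpoint height {L A} (t : rtree L A) : nat :=
  match t with rleaf _ => 0 | rnode _ ts => S (list_max (map height ts)) end.

Lemma height_child {L A} (i : L) (ts : list (rtree L A)) u : In u ts -> height u < height (rnode i ts).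
Proof. intros H. simpl. apply Nat.lt_succ_r.
  assert (Hm := proj1 (list_max_le (map height ts) (list_max (map height ts))) (le_n _)).
  rewrite Forall_forall in Hm. apply Hm. apply in_map; auto. Qed.

Lemma rle_height {L A} (lv : L -> nat) (R : A -> A -> Prop) (s t : rtree L A) : rle lv R s t -> height s <= height t.
Proof.
  revert s. induction t as [y|j ts IH] using rtree_ind'; intros s H; try rewrite Forall_forall in IH.
  - destruct s; simpl in *; [lia|tauto].
  - destruct s as [x|i ss].
    + simpl. lia.
    + apply rle_nn in H. destruct H as [[-> M]|[_ [u [Hu H]]]].
      * simpl. apply le_n_S. apply list_max_le. rewrite Forall_forall. intros hh Hh.
        apply in_map_iff in Hh. destruct Hh as [a [<- Ha]].
        destruct (In_nth_error _ _ Ha) as [kk Hkk]. destruct M as [g [_ Hg]].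
        destruct (Hg _ _ Hkk) as [b [Hb Hab]]. apply nth_error_In in Hb.
        apply Nat.le_trans with (height b); [apply IH; auto|]. apply Nat.lt_succ_r. exact (height_child j ts b Hb).
      * apply IH in H; auto. pose proof (height_child j ts u Hu). lia.
Qed.

Lemma rle_antisym {L A} (lv : L -> nat) (R : A -> A -> Prop) (Hr : forall x, R x x)
  (Ht : forall x y z, R x y -> R y z -> R x z)
  (Ha : forall x y, R x y -> R y x -> x = y) (s t : rtree L A) :
  rle lv R s t -> rle lv R t s -> req s t.
Proof.
  revert s. induction t as [y|j ts IH] using rtree_ind'; intros s H1 H2; try rewrite Forall_forall in IH.
  - destruct s as [x|i ss]; simpl in *; [auto|tauto].
  - destruct s as [x|i ss].
    + simpl in H2; tauto.
    + pose proof (rle_height lv R _ _ H1) as h1. pose proof (rle_height lv R _ _ H2) as h2.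
      apply rle_nn in H1. apply rle_nn in H2.
      destruct H1 as [[-> M1]|[_ [u [Hu H1]]]].
      * destruct H2 as [[_ M2]|[_ [v [Hv H2]]]].
        -- apply req_nn. split; auto. split. { apply Nat.le_antisymm; eapply mr_length; eauto. }
           pose proof (mr_antisym (rle lv R) ss ts (rle_trans lv R Ht) M1 M2) as M.
           revert M. apply mr_impl. intros a b _ Hb [Hab Hba]. apply IH; auto.
        -- exfalso. apply rle_height in H2. pose proof (height_child j ss v Hv). lia.
      * exfalso. apply rle_height in H1. pose proof (height_child j ts u Hu). lia.
Qed.

Lemma rsupp_node {L A} (i : L) ts (y : A) : rsupp (rnode i ts) y <-> exists u, In u ts /\ rsupp u y.
Proof. simpl. apply ex_in_map. Qed.

Lemma rsupp_req {L A} (s t : rtree L A) y : req s t -> rsupp s y -> rsupp t y.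
Proof.
  revert s. induction t as [z|j ts IH] using rtree_ind'; intros s H Hs; try rewrite Forall_forall in IH.
  - destruct s as [x|i ss]; simpl in *; [congruence|tauto].
  - destruct s as [x|i ss]; [simpl in H; tauto|].
    apply req_nn in H. destruct H as [_ [_ [g [_ Hg]]]].
    apply rsupp_node in Hs. destruct Hs as [a [Ha Hs]]. apply rsupp_node.
    destruct (In_nth_error _ _ Ha) as [k Hk]. destruct (Hg _ _ Hk) as [b [Hb Hab]].
    exists b. split; [eapply nth_error_In; eauto|]. eapply IH; eauto using nth_error_In.
Qed.

Lemma rle_supp {L A} (lv : L -> nat) (R : A -> A -> Prop) (s t : rtree L A) x :
  rle lv R s t -> rsupp s x -> exists y, rsupp t y /\ R x y.
Proof.
  revert s. induction t as [z|j ts IH] using rtree_ind'; intros s H Hs; try rewrite Forall_forall in IH.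
  - destruct s as [x'|i ss]; simpl in *; [subst; eauto|tauto].
  - assert (Hc : forall u, In u ts -> rle lv R s u -> exists y, rsupp (rnode j ts) y /\ R x y).
    { intros u Hu Hsu. destruct (IH u Hu s Hsu Hs) as [y [Hy Hxy]]. exists y. split; auto. apply rsupp_node. eauto. }
    destruct s as [x'|i ss].
    + apply rle_ln in H. destruct H as [u [Hu H]]. eauto.
    + apply rle_nn in H. destruct H as [[-> [g [_ Hg]]]|[_ [u [Hu H]]]]; [|eauto].
      apply rsupp_node in Hs. destruct Hs as [a [Ha Hs]].
      destruct (In_nth_error _ _ Ha) as [k Hk]. destruct (Hg _ _ Hk) as [b [Hb Hab]].
      apply nth_error_In in Hb. destruct (IH b Hb a Hab Hs) as [y [Hy Hxy]].
      exists y. split; auto. apply rsupp_node; eauto.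
Qed.

Lemma rsupp_fin {L A} (t : rtree L A) : is_finite (rsupp t).
Proof.
  induction t as [x|i ts IH] using rtree_ind'.
  - exists [x]. intros y. simpl. split; [intros ->; auto| intros [->|[]]; auto].
  - induction IH as [|u us Hu Hus IHus].
    + exists []. intros y. simpl. split; [intros [p [[] _]]|intros []].
    + destruct Hu as [l1 H1]. destruct IHus as [l2 H2]. exists (l1 ++ l2). intros y.
      rewrite in_app_iff, <- H1, <- H2, !rsupp_node. simpl. split.
      * intros [v [[<-|Hv] Hy]]; eauto.
      * intros [Hy|[v [Hv Hy]]]; eauto.
Qed.

Lemma rmap_id {L A} (t : rtree L A) : rmap (fun x => x) t = t.
Proof. induction t as [x|i ts IH] using rtree_ind'; simpl; auto. f_equal. induction IH; simpl; congruence. Qed.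

Lemma rmap_comp {L A B C} (f : A -> B) (g : B -> C) (t : rtree L A) : rmap (fun x => g (f x)) t = rmap g (rmap f t).
Proof. induction t as [x|i ts IH] using rtree_ind'; simpl; auto. f_equal. rewrite map_map. induction IH; simpl; congruence. Qed.

Lemma rmap_req {L A B} (f : A -> B) (s t : rtree L A) : req s t -> req (rmap f s) (rmap f t).
Proof.
  revert s. induction t as [y|j ts IH] using rtree_ind'; intros [x|i ss] H; try (simpl in *; tauto).
  - simpl in *. congruence.
  - simpl rmap. apply req_nn in H. apply req_nn. destruct H as [-> [Hl M]]. rewrite !length_map. split; auto. split; auto.
    apply mr_map. revert M. apply mr_impl. intros a b _ Hb Hab. rewrite Forall_forall in IH. apply IH; auto.
Qed.

Lemma rle_rmap {L A B} (lv : L -> nat) (R : A -> A -> Prop) (R' : B -> B -> Prop) (f : A -> B) (s t : rtree L A) :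
  (forall x y, R x y -> R' (f x) (f y)) -> rle lv R s t -> rle lv R' (rmap f s) (rmap f t).
Proof.
  intros Hf. revert s. induction t as [y|j ts IH] using rtree_ind'; intros s H; try rewrite Forall_forall in IH.
  - destruct s; simpl in *; auto.
  - destruct s as [x|i ss]; simpl rmap.
    + apply rle_ln in H. apply rle_ln. destruct H as [u [Hu H]]. exists (rmap f u). split; [apply in_map; auto|].
      exact (IH u Hu (rleaf x) H).
    + apply rle_nn in H. apply rle_nn. destruct H as [[-> M]|[Hl [u [Hu H]]]].
      * left. split; auto. apply mr_map. revert M. apply mr_impl. intros a b _ Hb Hab. apply IH; auto.
      * right. split; auto. exists (rmap f u). split; [apply in_map; auto|]. exact (IH u Hu (rnode i ss) H).
Qed.

Lemma rle_rmap_inv {L A B} (lv : L -> nat) (R : A -> A -> Prop) (R' : B -> B -> Prop) (f : A -> B) (s t : rtree L A) :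
  (forall x y, R' (f x) (f y) -> R x y) -> rle lv R' (rmap f s) (rmap f t) -> rle lv R s t.
Proof.
  intros Hf. revert s. induction t as [y|j ts IH] using rtree_ind'; intros s H; try rewrite Forall_forall in IH.
  - destruct s; simpl in *; auto.
  - destruct s as [x|i ss]; simpl rmap in H.
    + apply rle_ln in H. apply rle_ln. destruct H as [u [Hu H]]. apply in_map_iff in Hu.
      destruct Hu as [c [<- Hc]]. exists c. split; [exact Hc|]. exact (IH c Hc (rleaf x) H).
    + apply rle_nn in H. apply rle_nn. destruct H as [[-> M]|[Hl [u [Hu H]]]].
      * left. split; auto. pose proof (proj1 (mr_map (rmap f) (rmap f) (rle lv R') ss ts) M) as M'. revert M'. apply mr_impl. intros a b _ Hb Hab. apply IH; auto.
      * right. split; auto. apply in_map_iff in Hu.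
        destruct Hu as [c [<- Hc]]. exists c. split; [exact Hc|]. exact (IH c Hc (rnode i ss) H).
Qed.

Lemma rsupp_rmap {L A B} (f : A -> B) (t : rtree L A) y : rsupp (rmap f t) y <-> exists x, rsupp t x /\ f x = y.
Proof.
  induction t as [x|i ts IH] using rtree_ind'.
  - simpl. split; [intros ->; eauto| intros [x' [Hx <-]]; subst; auto].
  - simpl rmap. rewrite Forall_forall in IH. split.
    + intros H. apply rsupp_node in H. destruct H as [u [Hu Hy]]. apply in_map_iff in Hu.
      destruct Hu as [c [<- Hc]]. apply IH in Hy; auto. destruct Hy as [x [Hx <-]].
      exists x. split; auto. apply rsupp_node. eauto.
    + intros [x [Hx <-]]. apply rsupp_node in Hx. destruct Hx as [c [Hc Hx]]. apply rsupp_node.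
      exists (rmap f c). split; [apply in_map; auto|]. apply IH; eauto.
Qed.

Lemma rmap_surj {L A B} (f : A -> B) (t : rtree L B) :
  (forall y, rsupp t y -> exists x, f x = y) -> exists s, rmap f s = t.
Proof.
  induction t as [y|j ts IH] using rtree_ind'; intros H.
  - destruct (H y eq_refl) as [x Hx]. exists (rleaf x). simpl. congruence.
  - assert (exists ss, map (rmap f) ss = ts) as [ss Hss].
    { revert H. induction IH as [|u us Hu Hus IHus]; intros H.
      - exists []. reflexivity.
      - destruct Hu as [s Hs]. { intros y Hy. apply H. apply rsupp_node. exists u; simpl; auto. }
        destruct IHus as [ss Hss].
        { intros y Hy. apply H. apply rsupp_node in Hy. destruct Hy as [v [Hv Hy]]. apply rsupp_node. exists v. simpl; auto. }
        exists (s :: ss). simpl. congruence. }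
    exists (rnode j ss). simpl. congruence.
Qed.

Lemma cls_eq n (X : ord) (s t : rtree (lab n) X) : req s t -> cls s = cls t.
Proof.
  intros H. apply eq_sig_hprop; [intros; apply proof_irrelevance|]. simpl.
  apply functional_extensionality. intros u. apply propositional_extensionality. split; intros Hu.
  - eapply req_trans; eauto.
  - eapply req_trans; eauto. apply req_sym; auto.
Qed.

Lemma repr_cls n (X : ord) (t : rtree (lab n) X) : req (repr (cls t)) t.
Proof.
  pose proof (repr_spec n X (cls t)) as E.
  assert (E' : (fun u => req u t) = (fun u => req u (repr (cls t)))) by exact E.
  apply (f_equal (fun P => P (repr (cls t)))) in E'. cbv beta in E'. rewrite E'. apply req_refl.
Qed.

Lemma cls_repr n (X : ord) (a : Tcar n X) : cls (repr a) = a.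
Proof. apply eq_sig_hprop; [intros; apply proof_irrelevance|]. simpl. symmetry. apply repr_spec. Qed.

Lemma rle_cls n (X : ord) (HX : is_po X) (s t : rtree (lab n) X) :
  rle labval (@rel X) (repr (cls s)) (repr (cls t)) <-> rle labval (@rel X) s t.
Proof.
  destruct HX as [Hr [_ Ht]]. pose proof (repr_cls n X s) as E1. pose proof (repr_cls n X t) as E2. split; intros H.
  - eapply rle_trans; [exact Ht| |eapply rle_trans; [exact Ht|exact H|]].
    + apply req_rle; auto. apply req_sym; auto.
    + apply req_rle; auto.
  - eapply rle_trans; [exact Ht| |eapply rle_trans; [exact Ht|exact H|]].
    + apply req_rle; auto.
    + apply req_rle; auto. apply req_sym; auto.
Qed.

Lemma rsupp_cls n (X : ord) (t : rtree (lab n) X) y : rsupp (repr (cls t)) y <-> rsupp t y.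
Proof. split; apply rsupp_req; [apply repr_cls| apply req_sym, repr_cls]. Qed.

Lemma T_dil n : normal_PO_dilator (T n) (Tsupp n).
Proof.
  split; [split; [|split; [|split; [|split; [|split; [|split; [|split]]]]]]|].
  - intros X [Hr [Ha Ht]]. split; [|split].
    + intros a. simpl. apply rle_refl; auto.
    + intros a b H1 H2. simpl in H1, H2. rewrite <- (cls_repr n X a), <- (cls_repr n X b). apply cls_eq.
      eapply rle_antisym; eauto.
    + intros a b c H1 H2. simpl in *. eapply rle_trans; eauto.
  - intros X Y f HX HY Hf a b H. simpl in *. unfold Tmap in H. apply (proj1 (rle_cls n Y HY _ _)) in H.
    eapply rle_rmap_inv; [exact Hf|exact H].
  - intros X HX s. simpl. unfold Tmap. rewrite rmap_id. apply cls_repr.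
  - intros X Y Z f g HX HY HZ Hf Hg s. simpl. unfold Tmap. rewrite rmap_comp. apply cls_eq.
    apply rmap_req. apply req_sym. apply repr_cls.
  - intros X Y f HX HY Hf a b. simpl. unfold Tmap. rewrite rle_cls; auto. split; intros H.
    + eapply rle_rmap_inv; [|exact H]. intros x y. apply Hf.
    + eapply rle_rmap; [|exact H]. intros x y. apply Hf.
  - intros X HX s. apply rsupp_fin.
  - intros X Y f HX HY Hf s y. unfold Tsupp, img. simpl. unfold Tmap. rewrite rsupp_cls. apply rsupp_rmap.
  - intros X Y f HX HY Hf t. unfold Tsupp. simpl. split.
    + intros [s <-] y Hy. unfold Tmap in Hy. apply rsupp_cls, rsupp_rmap in Hy. destruct Hy as [x [_ Hx]]. eauto.
    + intros H. destruct (rmap_surj f (repr t) H) as [s0 Hs0]. exists (cls s0). unfold Tmap.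
      rewrite <- (cls_repr n Y t). apply cls_eq. rewrite <- Hs0. apply rmap_req. apply repr_cls.
  - intros X HX s t H x Hx. unfold Tsupp in *. simpl in H. eapply rle_supp; eauto.
Qed.

Lemma Tm_eq n (X : ord) (a b : Tmcar n X) : proj1_sig a = proj1_sig b -> a = b.
Proof. apply eq_sig_hprop. intros; apply proof_irrelevance. Qed.

Lemma Tm_dil n : normal_PO_dilator (Tminus n) (Tmsupp n).
Proof.
  destruct (T_dil (S n)) as [[Hpo [Hq [Hid [Hcomp [Hemb [Hfin [Hnat Hsc]]]]]]] Hnorm].
  split; [split; [|split; [|split; [|split; [|split; [|split; [|split]]]]]]|].
  - intros X HX. destruct (Hpo X HX) as [Hr [Ha Ht]]. split; [|split].
    + intros a. apply Hr.
    + intros a b H1 H2. apply Tm_eq. apply Ha; auto.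
    + intros a b c H1 H2. exact (Ht _ _ _ H1 H2).
  - intros X Y f HX HY Hf a b H. exact (Hq X Y f HX HY Hf _ _ H).
  - intros X HX s. apply Tm_eq. exact (Hid X HX (proj1_sig s)).
  - intros X Y Z f g HX HY HZ Hf Hg s. apply Tm_eq. exact (Hcomp X Y Z f g HX HY HZ Hf Hg (proj1_sig s)).
  - intros X Y f HX HY Hf a b. exact (Hemb X Y f HX HY Hf (proj1_sig a) (proj1_sig b)).
  - intros X HX s. exact (Hfin X HX (proj1_sig s)).
  - intros X Y f HX HY Hf s y. exact (Hnat X Y f HX HY Hf (proj1_sig s) y).
  - intros X Y f HX HY Hf t. unfold Tmsupp. split.
    + intros [s <-]. apply (Hsc X Y f HX HY Hf). exists (proj1_sig s). reflexivity.
    + intros H. apply (Hsc X Y f HX HY Hf) in H. destruct H as [s1 Hs1].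
      assert (Hr : root_ok (repr s1)).
      { pose proof (proj2_sig t) as Ht. simpl in Ht. rewrite <- Hs1 in Ht.
        simpl in Ht. unfold Tmap in Ht.
        apply (req_root _ _ (rmap f (repr s1))) in Ht; [|apply req_sym, repr_cls].
        destruct (repr s1); simpl in *; auto. }
      exists (exist _ s1 Hr). apply Tm_eq. exact Hs1.
  - intros X HX s t H. exact (Hnorm X HX _ _ H).
Qed.

Theorem proposition5p5 (n : nat) :
  normal_PO_dilator (T n) (Tsupp n) /\
  normal_PO_dilator (Tminus n) (Tmsupp n).
Proof. split; [apply T_dil|apply Tm_dil]. Qed.
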